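(* For each $n\in\mathbb{N}$: if $(\Sigma^{\mathrm{CoR}}_1)_{\le 1}/{\sim_{\mathrm{REL}}}$ is finite, then $(\Sigma^{\mathrm{CoR}}_{n})_{\le 1}/{\sim_{\mathrm{REL}}}$ is finite.
   Context: Fix a non-empty finite set $V$ of variables. CoR terms are generated by $t ::= a \mid \bot \mid \top \mid t \cup t \mid t \cap t \mid t^{-} \mid \mathrm{I} \mid \mathrm{D} \mid t \cdot t \mid t \dagger t \mid t^{\pi}$, where $a \in V$ and $\pi$ ranges over all maps $\{1,2\}\to\{1,2\}$. A structure $M$ consists of a non-empty set $|M|$ and a binary relation $a^M\subseteq|M|^2$ for each $a\in V$. The interpretation $[\![t]\!]_M\subseteq|M|^2$: $[\![a]\!]_M=a^M$, $[\![\bot]\!]_M=\emptyset$, $[\![\top]\!]_M=|M|^2$, $\cup,\cap$ set-theoretic, $[\![t^-]\!]_M=|M|^2\setminus[\![t]\!]_M$, $[\![\mathrm{I}]\!]_M=\{(x,y):x=y\}$, $[\![\mathrm{D}]\!]_M=\{(x,y):x\ne y\}$, $R\cdot S=\{(x,y):\exists z,(x,z)\in R\wedge(z,y)\in S\}$, $R\dagger S=\{(x,y):\forall z,(x,z)\in R\vee(z,y)\in S\}$, $R^{\pi}=\{(x_1,x_2):(x_{\pi(1)},x_{\pi(2)})\in R\}$. $t\sim_{\mathrm{REL}}s$ iff $[\![t]\!]_M=[\![s]\!]_M$ for all structures $M$. $\mathrm{vo}(t)$ is the number of occurrences of variables in $t$, $S_{\le k}=\{t\in S:\mathrm{vo}(t)\le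 k\}$. The dot-dagger alternation hierarchy: $\Sigma^{\mathrm{CoR}}_n,\Pi^{\mathrm{CoR}}_n$ are the least sets such that $\Sigma^{\mathrm{CoR}}_0=\Pi^{\mathrm{CoR}}_0$ is the set of terms containing neither $\cdot$ nor $\dagger$; $\Sigma^{\mathrm{CoR}}_n\cup\Pi^{\mathrm{CoR}}_n\subseteq\Sigma^{\mathrm{CoR}}_{n+1}\cap\Pi^{\mathrm{CoR}}_{n+1}$; for $n\ge1$, if $s,u\in\Sigma^{\mathrm{CoR}}_n$ then $s\cup u,s\cap u,s\cdot u,s^{\pi}\in\Sigma^{\mathrm{CoR}}_n$ and $s\dagger u\in\Pi^{\mathrm{CoR}}_{n+1}$; for $n\ge1$, if $s,u\in\Pi^{\mathrm{CoR}}_n$ then $s\cup u,s\cap u,s\dagger u,s^{\pi}\in\Pi^{\mathrm{CoR}}_n$ and $s\cdot u\in\Sigma^{\mathrm{CoR}}_{n+1}$. *)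

(* Defs.v *)
From mathcomp Require Import all_boot.
Set Implicit Arguments. Unset Strict Implicit. Unset Printing Implicit Defensive.

(* Maps pi : {1,2} -> {1,2} are encoded as bool -> bool,
   with false standing for 1 and true for 2. *)
Inductive term (V : Type) : Type :=
| tvar  : V -> term V
| tbot  : term V
| ttop  : term V
| tcup  : term V -> term V -> term V
| tcap  : term V -> term V -> term V
| tcomp : term V -> term V
| tid   : term V
| tdiff : term V
| tdot  : term V -> term V -> term V
| tdag  : term V -> term V -> term V
| tperm : (bool -> bool) -> term V -> term V.

Arguments tbot {V}. Arguments ttop {V}. Arguments tid {V}. Arguments tdiff {V}.

Fixpoint sem (V M : Type) (I : V -> M -> M -> Prop) (t : term V) : M -> M -> Prop :=
  match t with
  | tvar a => I a
  | tbot => fun _ _ => False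
  | ttop => fun _ _ => True
  | tcup s u => fun x y => sem I s x y \/ sem I u x y
  | tcap s u => fun x y => sem I s x y /\ sem I u x y
  | tcomp s => fun x y => ~ sem I s x y
  | tid => fun x y => x = y
  | tdiff => fun x y => x <> y
  | tdot s u => fun x y => exists z, sem I s x z /\ sem I u z y
  | tdag s u => fun x y => forall z, sem I s x z \/ sem I u z y
  | tperm pi s => fun x y =>
      let xs := fun b : bool => if b then y else x in
      sem I s (xs (pi false)) (xs (pi true))
  end.

(* t ~REL s : equal interpretation in every structure (non-empty universe). *)
Definition rel_equiv (V : Type) (t s : term V) : Prop :=
  forall (M : Type) (m0 : M) (I : V -> M -> M -> Prop) (x y : M),
    sem I t x y <-> sem I s x y.

Fixpoint vo (V : Type) (t : term V) : nat :=
  match t with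
  | tvar _ => 1
  | tbot | ttop | tid | tdiff => 0
  | tcup s u | tcap s u | tdot s u | tdag s u => vo s + vo u
  | tcomp s | tperm _ s => vo s
  end.

Fixpoint dd_free (V : Type) (t : term V) : bool :=
  match t with
  | tvar _ | tbot | ttop | tid | tdiff => true
  | tcup s u | tcap s u => dd_free s && dd_free u
  | tcomp s | tperm _ s => dd_free s
  | tdot _ _ | tdag _ _ => false
  end.

Inductive Sigma (V : Type) : nat -> term V -> Prop :=
| Sig0 : forall t, dd_free t -> Sigma 0 t
| SigS_Sig : forall n t, Sigma n t -> Sigma n.+1 t
| SigS_Pi : forall n t, Pi n t -> Sigma n.+1 t
| Sig_cup : forall n s u, 1 <= n -> Sigma n s -> Sigma n u -> Sigma n (tcup s u)
| Sig_cap : forall n s u, 1 <= n -> Sigma n s -> Sigma n u -> Sigma n (tcap s u)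
| Sig_dot : forall n s u, 1 <= n -> Sigma n s -> Sigma n u -> Sigma n (tdot s u)
| Sig_perm : forall n pi s, 1 <= n -> Sigma n s -> Sigma n (tperm pi s)
| Sig_dotPi : forall n s u, 1 <= n -> Pi n s -> Pi n u -> Sigma n.+1 (tdot s u)
with Pi (V : Type) : nat -> term V -> Prop :=
| Pi0 : forall t, dd_free t -> Pi 0 t
| PiS_Sig : forall n t, Sigma n t -> Pi n.+1 t
| PiS_Pi : forall n t, Pi n t -> Pi n.+1 t
| Pi_cup : forall n s u, 1 <= n -> Pi n s -> Pi n u -> Pi n (tcup s u)
| Pi_cap : forall n s u, 1 <= n -> Pi n s -> Pi n u -> Pi n (tcap s u)
| Pi_dag : forall n s u, 1 <= n -> Pi n s -> Pi n u -> Pi n (tdag s u)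
| Pi_perm : forall n pi s, 1 <= n -> Pi n s -> Pi n (tperm pi s)
| Pi_dagSig : forall n s u, 1 <= n -> Sigma n s -> Sigma n u -> Pi n.+1 (tdag s u).

Definition finite_quotient (V : Type) (S : term V -> Prop) : Prop :=
  exists (k : nat) (f : nat -> term V),
    forall t, S t -> exists i, i < k /\ rel_equiv t (f i).

(* Main.v *)
Require Import Defs.
From mathcomp Require Import all_boot.
From Stdlib Require Import Classical FunctionalExtensionality PropExtensionality.
From Stdlib Require List.
Set Implicit Arguments. Unset Strict Implicit. Unset Printing Implicit Defensive.

Lemma relext (M : Type) (R S : M -> M -> Prop) : (forall x y, R x y <-> S x y) -> R = S.
Proof. move=> H; apply: functional_extensionality => x; apply: functional_extensionality => y; apply: propositional_extensionality; exact: H. Qed.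

Fixpoint subst (V : Type) (s t : term V) : term V :=
  match t with
  | tvar _ => s
  | tbot => tbot | ttop => ttop | tid => tid | tdiff => tdiff
  | tcup a b => tcup (subst s a) (subst s b)
  | tcap a b => tcap (subst s a) (subst s b)
  | tcomp a => tcomp (subst s a)
  | tdot a b => tdot (subst s a) (subst s b)
  | tdag a b => tdag (subst s a) (subst s b)
  | tperm pi a => tperm pi (subst s a)
  end.

Lemma sem_subst V M (I : V -> M -> M -> Prop) s t :
  sem I (subst s t) = sem (fun _ => sem I s) t.
Proof.
elim: t => [v|||a IHa b IHb|a IHa b IHb|a IHa|||a IHa b IHb|a IHa b IHb|pi a IHa] //=;
  by rewrite ?IHa ?IHb.
Qed.

Lemma subst_closed V (s t : term V) : vo t = 0 -> subst s t = t.
Proof.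
elim: t => [v|||a IHa b IHb|a IHa b IHb|a IHa|||a IHa b IHb|a IHa b IHb|pi a IHa] //=;
  try (move/eqP; rewrite addn_eq0 => /andP[/eqP Ha /eqP Hb]; by rewrite IHa ?IHb).
all: by move=> H; rewrite IHa.
Qed.

Definition cf (M : Type) (e d : Prop) : M -> M -> Prop := fun x y => (x = y /\ e) \/ (x <> y /\ d).

Definition eqv V (P : Type -> Prop) (t u : term V) :=
  forall M (m0 : M) (I : V -> M -> M -> Prop), P M -> sem I t = sem I u.

Definition sizeok (P : Type -> Prop) (B2 B3 : Prop) :=
  forall M, P M -> (forall x : M, (exists z, z <> x) <-> B2) /\
    (forall x y : M, x <> y -> ((exists z, z <> x /\ z <> y) <-> B3)).

Lemma dot_tab M (B2 B3 : Prop) (H2 : forall x : M, (exists z, z <> x) <-> B2)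
  (H3 : forall x y : M, x <> y -> ((exists z, z <> x /\ z <> y) <-> B3)) e1 d1 e2 d2 (x y : M) :
  (exists z, cf e1 d1 x z /\ cf e2 d2 z y) <->
  cf (e1 /\ e2 \/ d1 /\ d2 /\ B2) (e1 /\ d2 \/ d1 /\ e2 \/ d1 /\ d2 /\ B3) x y.
Proof.
rewrite /cf; split.
- case=> z [[[exz He1]|[nxz Hd1]] [[ezy He2]|[nzy Hd2]]].
  + subst; left; tauto.
  + subst; right; tauto.
  + subst; right; tauto.
  + case: (classic (x = y)) => [exy|nxy].
    * subst; left; split=>//; right; split=>//; split=>//; apply/(H2 y); exists z; congruence.
    * right; split=>//; right; right; split=>//; split=>//; apply/(H3 _ _ nxy); exists z; split; congruence.
- case=> [[exy [[He1 He2]|[Hd1 [Hd2 HB2]]]]|[nxy [[He1 Hd2]|[[Hd1 He2]|[Hd1 [Hd2 HB3]]]]]].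
  + subst; exists y; tauto.
  + subst; case/(H2 y): HB2 => z nz; exists z; split; right; split => //; congruence.
  + exists x; split; [left|right]; tauto.
  + exists y; split; [right|left]; tauto.
  + case/(H3 _ _ nxy): HB3 => z [n1 n2]; exists z; split; right; split => //; congruence.
Qed.
Lemma cf_not M (e d : Prop) (x y : M) : ~ cf e d x y <-> cf (~ e) (~ d) x y.
Proof. rewrite /cf; case: (classic (x = y)) => h; tauto. Qed.

Lemma closed_sem V P B2 B3 (HP : sizeok P B2 B3) (t : term V) : vo t = 0 ->
  exists e d : Prop, forall M (m0 : M) (I : V -> M -> M -> Prop), P M -> sem I t = cf e d.
Proof.
elim: t => [v|||a IHa b IHb|a IHa b IHb|a IHa|||a IHa b IHb|a IHa b IHb|pi a IHa] //=.
- by exists False, False => M m0 I _; apply: relext => x y; rewrite /cf; tauto.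
- by exists True, True => M m0 I _; apply: relext => x y; rewrite /cf; case: (classic (x = y)); tauto.
- move/eqP; rewrite addn_eq0 => /andP[/eqP /IHa [e1 [d1 H1]] /eqP /IHb [e2 [d2 H2]]].
  exists (e1 \/ e2), (d1 \/ d2) => M m0 I HM; rewrite (H1 M m0 I HM) (H2 M m0 I HM).
  by apply: relext => x y; rewrite /cf; case: (classic (x = y)); tauto.
- move/eqP; rewrite addn_eq0 => /andP[/eqP /IHa [e1 [d1 H1]] /eqP /IHb [e2 [d2 H2]]].
  exists (e1 /\ e2), (d1 /\ d2) => M m0 I HM; rewrite (H1 M m0 I HM) (H2 M m0 I HM).
  by apply: relext => x y; rewrite /cf; case: (classic (x = y)); tauto.
- move/IHa => [e1 [d1 H1]].
  exists (~ e1), (~ d1) => M m0 I HM; rewrite (H1 M m0 I HM).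
  by apply: relext => x y; apply: cf_not.
- by exists True, False => M m0 I _; apply: relext => x y; rewrite /cf; case: (classic (x = y)); tauto.
- by exists False, True => M m0 I _; apply: relext => x y; rewrite /cf; case: (classic (x = y)); tauto.
- move/eqP; rewrite addn_eq0 => /andP[/eqP /IHa [e1 [d1 H1]] /eqP /IHb [e2 [d2 H2]]].
  exists (e1 /\ e2 \/ d1 /\ d2 /\ B2), (e1 /\ d2 \/ d1 /\ e2 \/ d1 /\ d2 /\ B3) => M m0 I HM.
  rewrite (H1 M m0 I HM) (H2 M m0 I HM).
  case: (HP M HM) => h2 h3.
  by apply: relext => x y; apply: dot_tab.
- move/eqP; rewrite addn_eq0 => /andP[/eqP /IHa [e1 [d1 H1]] /eqP /IHb [e2 [d2 H2]]].
  exists (~ (~e1 /\ ~e2 \/ ~d1 /\ ~d2 /\ B2)), (~ (~e1 /\ ~d2 \/ ~d1 /\ ~e2 \/ ~d1 /\ ~d2 /\ B3)) => M m0 I HM.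
  rewrite (H1 M m0 I HM) (H2 M m0 I HM).
  case: (HP M HM) => h2 h3.
  apply: relext => x y.
  rewrite -cf_not -(dot_tab h2 h3).
  split.
  + move=> H [z [/cf_not A /cf_not B]]; by case: (H z).
  + move=> H z; apply: NNPP => nH; apply: H; exists z.
    split; apply/cf_not; tauto.
- move/IHa => [e [d H]].
  case Hf: (pi false); case Ht: (pi true).
  + exists e, e => M m0 I HM; apply: relext => x y; rewrite /= (H M m0 I HM) /cf.
    case: (classic (x = y)) => h; split; try tauto; case=> [[_ ?]|[hh _]] //; by case: hh.
  + exists e, d => M m0 I HM; apply: relext => x y; rewrite /= (H M m0 I HM) /cf.
    case: (classic (x = y)) => h; split; case=> [[hh ?]|[hh ?]]; try tauto; by [left; split|right; split; [congruence|]].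
  + exists e, d => M m0 I HM; apply: relext => x y; rewrite /= (H M m0 I HM) /cf.
    by [].
  + exists e, e => M m0 I HM; apply: relext => x y; rewrite /= (H M m0 I HM) /cf.
    case: (classic (x = y)) => h; split; try tauto; case=> [[_ ?]|[hh _]] //; by case: hh.
Qed.

Lemma cst_exists V (e d : Prop) : exists c : term V, dd_free c /\ vo c = 0 /\
  forall M (I : V -> M -> M -> Prop), sem I c = cf e d.
Proof.
case: (classic e) => he; case: (classic d) => hd.
- exists ttop; do 2 split => //; move=> M I; apply: relext => x y; rewrite /cf /=; case: (classic (x = y)); tauto.
- exists tid; do 2 split => //; move=> M I; apply: relext => x y; rewrite /cf /=; case: (classic (x = y)); tauto.
- exists tdiff; do 2 split => //; move=> M I; apply: relext => x y; rewrite /cf /=; case: (classic (x = y)); tauto.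
- exists tbot; do 2 split => //; move=> M I; apply: relext => x y; rewrite /cf /=; case: (classic (x = y)); tauto.
Qed.

Lemma closed_eqv V P B2 B3 (HP : sizeok P B2 B3) (t : term V) : vo t = 0 ->
  exists c, dd_free c /\ vo c = 0 /\ eqv P t c.
Proof.
move/(closed_sem HP) => [e [d H]].
case: (cst_exists V e d) => c [h1 [h2 h3]].
exists c; do 2 split => //; move=> M m0 I HM; by rewrite H // h3.
Qed.
Definition P1 (M : Type) := forall x y : M, x = y.
Definition P2 (M : Type) := (exists a b : M, a <> b) /\ forall x y z : M, x = y \/ x = z \/ y = z.
Definition P3 (M : Type) := exists a b c : M, a <> b /\ a <> c /\ b <> c.

Lemma sizeok1 : sizeok P1 False False.
Proof.
move=> M H; split.
- move=> x; split => // [[z]]; by rewrite (H z x).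
- by move=> x y; rewrite (H x y).
Qed.

Lemma ex_ne M (a b : M) : a <> b -> forall x : M, exists z, z <> x.
Proof. move=> hab x; case: (classic (a = x)) => h; [exists b|exists a]; congruence. Qed.

Lemma sizeok2 : sizeok P2 True False.
Proof.
move=> M [[a [b hab]] H]; split.
- move=> x; split => // _; exact: ex_ne hab x.
- move=> x y hxy; split => // [[z [h1 h2]]]; case: (H x y z) => [|[]]; congruence.
Qed.

Lemma sizeok3 : sizeok P3 True True.
Proof.
move=> M [a [b [c [hab [hac hbc]]]]]; split.
- move=> x; split => // _; exact: ex_ne hab x.
- move=> x y hxy; split => // _.
  case: (classic (a = x)) => h1; case: (classic (a = y)) => h2;
  case: (classic (b = x)) => h3; case: (classic (b = y)) => h4;
  case: (classic (c = x)) => h5; case: (classic (c = y)) => h6;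
  first [exists a; split; congruence | exists b; split; congruence | exists c; split; congruence | exfalso; congruence].
Qed.

Lemma classify (M : Type) (m0 : M) : P1 M \/ P2 M \/ P3 M.
Proof.
case: (classic (P1 M)) => h1; [by left|right].
have [a [b hab]] : exists a b : M, a <> b.
  apply: NNPP => H; apply: h1 => x y; apply: NNPP => hxy; apply: H; by exists x, y.
case: (classic (forall x y z : M, x = y \/ x = z \/ y = z)) => h.
- by left; split => //; exists a, b.
- right; apply: NNPP => H; apply: h => x y z; apply: NNPP => H'; apply: H.
  exists x, y, z; split; [|split]; move=> e; apply: H'; tauto.
Qed.

Fixpoint dual V (t : term V) : term V := match t with
 | tvar a => tcomp (tvar a) | tbot => ttop | ttop => tbot
 | tcup a b => tcap (dual a) (dual b) | tcap a b => tcup (dual a) (dual b)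
 | tcomp a => a | tid => tdiff | tdiff => tid
 | tdot a b => tdag (dual a) (dual b) | tdag a b => tdot (dual a) (dual b)
 | tperm pi a => tperm pi (dual a) end.

Lemma dual_sem V M (I : V -> M -> M -> Prop) t : forall x y, sem I (dual t) x y <-> ~ sem I t x y.
Proof.
elim: t => [v|||a IHa b IHb|a IHa b IHb|a IHa|||a IHa b IHb|a IHa b IHb|pi a IHa] x y /=.
- tauto.
- tauto.
- tauto.
- rewrite IHa IHb; tauto.
- rewrite IHa IHb; tauto.
- split; [move=> h hh; exact: hh h| move=> h; exact: NNPP].
- tauto.
- tauto.
- split; [move=> h [z [h1 h2]]; case: (h z); rewrite ?IHa ?IHb; tauto|].
  move=> h z; apply: NNPP => nh; apply: h; exists z; move: nh; rewrite IHa IHb; tauto.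
- split; [move=> [z [h1 h2]] h; move: (h z) h1 h2; rewrite IHa IHb; tauto|].
  move=> h; apply: NNPP => nh; apply: h => z; apply: NNPP => nh2; apply: nh; exists z; rewrite IHa IHb; tauto.
- by rewrite IHa.
Qed.

Lemma dual_vo V (t : term V) : vo (dual t) = vo t.
Proof. by elim: t => //= *; congruence. Qed.

Lemma dual_dd V (t : term V) : dd_free t -> dd_free (dual t).
Proof.
elim: t => /= [v|||a IHa b IHb|a IHa b IHb|a IHa|||a IHa b IHb|a IHa b IHb|pi a IHa] //.
1,2: by case/andP => /IHa -> /IHb ->.
Qed.

Scheme Sigma_mut := Induction for Sigma Sort Prop
  with Pi_mut := Induction for Pi Sort Prop.
Combined Scheme SP_mut from Sigma_mut, Pi_mut.

Lemma dual_SP V : (forall m (t : term V), Sigma m t -> Pi m (dual t)) /\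
  (forall m (t : term V), Pi m t -> Sigma m (dual t)).
Proof.
apply: SP_mut => /=.
- move=> t h; apply: Pi0; exact: dual_dd.
- move=> *; exact: PiS_Pi.
- move=> *; exact: PiS_Sig.
- move=> *; exact: Pi_cap.
- move=> *; exact: Pi_cup.
- move=> *; exact: Pi_dag.
- move=> *; exact: Pi_perm.
- move=> *; exact: Pi_dagSig.
- move=> t h; apply: Sig0; exact: dual_dd.
- move=> *; exact: SigS_Pi.
- move=> *; exact: SigS_Sig.
- move=> *; exact: Sig_cap.
- move=> *; exact: Sig_cup.
- move=> *; exact: Sig_dot.
- move=> *; exact: Sig_perm.
- move=> *; exact: Sig_dotPi.
Qed.
Lemma eqv_refl V P (t : term V) : eqv P t t.
Proof. by []. Qed.
Lemma eqv_trans V P (t u w : term V) : eqv P t u -> eqv P u w -> eqv P t w.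
Proof. move=> h1 h2 M m0 I HM; by rewrite (h1 M m0 I HM) (h2 M m0 I HM). Qed.
Lemma eqv_sym V P (t u : term V) : eqv P t u -> eqv P u t.
Proof. move=> h M m0 I HM; by rewrite (h M m0 I HM). Qed.
Lemma eqv_cup V P (a b a' b' : term V) : eqv P a a' -> eqv P b b' -> eqv P (tcup a b) (tcup a' b').
Proof. move=> h1 h2 M m0 I HM /=; by rewrite (h1 M m0 I HM) (h2 M m0 I HM). Qed.
Lemma eqv_cap V P (a b a' b' : term V) : eqv P a a' -> eqv P b b' -> eqv P (tcap a b) (tcap a' b').
Proof. move=> h1 h2 M m0 I HM /=; by rewrite (h1 M m0 I HM) (h2 M m0 I HM). Qed.
Lemma eqv_dot V P (a b a' b' : term V) : eqv P a a' -> eqv P b b' -> eqv P (tdot a b) (tdot a' b').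
Proof. move=> h1 h2 M m0 I HM /=; by rewrite (h1 M m0 I HM) (h2 M m0 I HM). Qed.
Lemma eqv_perm V P pi (a a' : term V) : eqv P a a' -> eqv P (tperm pi a) (tperm pi a').
Proof. move=> h1 M m0 I HM /=; by rewrite (h1 M m0 I HM). Qed.

Lemma sig1_dd V (c : term V) : dd_free c -> Sigma 1 c.
Proof. move=> h; apply: SigS_Sig; exact: Sig0. Qed.

Lemma vo_split V (s u : term V) : vo s + vo u <= 1 ->
  (vo s = 0 /\ vo u <= 1) \/ (vo u = 0 /\ vo s <= 1).
Proof. case: (vo s) => [|[|k]]; case: (vo u) => [|[|k']] //=; auto. Qed.

Lemma decomp V P B2 B3 (HP : sizeok P B2 B3) (a : V) n :
  forall m (t : term V), Sigma m t -> m = n.+1 -> vo t <= 1 ->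
  exists C s, Sigma 1 C /\ vo C <= 1 /\ (Sigma n s \/ Pi n s) /\ vo s <= 1 /\ eqv P t (subst s C).
Proof.
move=> m t; elim => {m t}.
- by [].
- move=> m t Ht _ [Hm] Hv; subst m; exists (tvar a), t; split; [exact: sig1_dd|]; split => //; split; [by left|]; split => //.
- move=> m t Ht [Hm] Hv; subst m; exists (tvar a), t; split; [exact: sig1_dd|]; split => //; split; [by right|]; split => //.
- move=> m s u _ Hs IHs Hu IHu Hm /= /vo_split [[hs hu]|[hu hs]].
  + case: (IHu Hm hu) => C [s' [h1 [h2 [h3 [h4 h5]]]]].
    case: (closed_eqv HP hs) => c [c1 [c2 c3]].
    exists (tcup c C), s'; split; [apply: Sig_cup => //; exact: sig1_dd|].
    split; [by rewrite /= c2|]; do 2 (split => //).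
    by rewrite /= subst_closed //; apply: eqv_cup.
  + case: (IHs Hm hs) => C [s' [h1 [h2 [h3 [h4 h5]]]]].
    case: (closed_eqv HP hu) => c [c1 [c2 c3]].
    exists (tcup C c), s'; split; [apply: Sig_cup => //; exact: sig1_dd|].
    split; [by rewrite /= c2 addn0|]; do 2 (split => //).
    by rewrite /= (subst_closed _ c2); apply: eqv_cup.
- move=> m s u _ Hs IHs Hu IHu Hm /= /vo_split [[hs hu]|[hu hs]].
  + case: (IHu Hm hu) => C [s' [h1 [h2 [h3 [h4 h5]]]]].
    case: (closed_eqv HP hs) => c [c1 [c2 c3]].
    exists (tcap c C), s'; split; [apply: Sig_cap => //; exact: sig1_dd|].
    split; [by rewrite /= c2|]; do 2 (split => //).
    by rewrite /= subst_closed //; apply: eqv_cap.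
  + case: (IHs Hm hs) => C [s' [h1 [h2 [h3 [h4 h5]]]]].
    case: (closed_eqv HP hu) => c [c1 [c2 c3]].
    exists (tcap C c), s'; split; [apply: Sig_cap => //; exact: sig1_dd|].
    split; [by rewrite /= c2 addn0|]; do 2 (split => //).
    by rewrite /= (subst_closed _ c2); apply: eqv_cap.
- move=> m s u _ Hs IHs Hu IHu Hm /= /vo_split [[hs hu]|[hu hs]].
  + case: (IHu Hm hu) => C [s' [h1 [h2 [h3 [h4 h5]]]]].
    case: (closed_eqv HP hs) => c [c1 [c2 c3]].
    exists (tdot c C), s'; split; [apply: Sig_dot => //; exact: sig1_dd|].
    split; [by rewrite /= c2|]; do 2 (split => //).
    by rewrite /= subst_closed //; apply: eqv_dot.
  + case: (IHs Hm hs) => C [s' [h1 [h2 [h3 [h4 h5]]]]].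
    case: (closed_eqv HP hu) => c [c1 [c2 c3]].
    exists (tdot C c), s'; split; [apply: Sig_dot => //; exact: sig1_dd|].
    split; [by rewrite /= c2 addn0|]; do 2 (split => //).
    by rewrite /= (subst_closed _ c2); apply: eqv_dot.
- move=> m pi s _ Hs IHs Hm /= hs.
  case: (IHs Hm hs) => C [s' [h1 [h2 [h3 [h4 h5]]]]].
  exists (tperm pi C), s'; split; [exact: Sig_perm|].
  do 3 (split => //); by apply: eqv_perm.
- move=> m s u _ Hs Hu [Hm] /= /vo_split [[hs hu]|[hu hs]]; subst m.
  + case: (closed_eqv HP hs) => c [c1 [c2 c3]].
    exists (tdot c (tvar a)), u; split; [apply: Sig_dot => //; apply: sig1_dd => //|].
    split; [by rewrite /= c2|]; split; [by right|]; split => //.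
    by rewrite /= ?subst_closed //; apply: eqv_dot => //; apply: eqv_refl.
  + case: (closed_eqv HP hu) => c [c1 [c2 c3]].
    exists (tdot (tvar a) c), s; split; [apply: Sig_dot => //; apply: sig1_dd => //|].
    split; [by rewrite /= c2|]; split; [by right|]; split => //.
    by rewrite /= ?(subst_closed _ c2); apply: eqv_dot => //; apply: eqv_refl.
Qed.
Definition fqL V P (S : term V -> Prop) :=
  exists l : list (term V), forall t, S t -> exists u, List.In u l /\ eqv P t u.

Lemma step V P B2 B3 (HP : sizeok P B2 B3) (a : V) n (lH : list (term V))
  (HH : forall t, Sigma 1 t /\ vo t <= 1 -> exists u, List.In u lH /\ eqv P t u) :
  fqL P (fun t : term V => Sigma n t /\ vo t <= 1) -> fqL P (fun t : term V => Pi n t /\ vo t <= 1) ->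
  fqL P (fun t : term V => Sigma n.+1 t /\ vo t <= 1).
Proof.
case=> l1 H1 [l2 H2].
exists (List.flat_map (fun C => List.map (fun s => subst s C) (List.app l1 l2)) lH).
move=> t [Ht Hvo].
case: (decomp HP a Ht erefl Hvo) => C [s [HC [HvC [Hs [Hvs He]]]]].
case: (HH C (conj HC HvC)) => uC [inC eC].
have [us [ins es]] : exists us, List.In us (List.app l1 l2) /\ eqv P s us.
  case: Hs => Hs; [case: (H1 s (conj Hs Hvs)) | case: (H2 s (conj Hs Hvs))] => u [iu eu];
  exists u; split => //; apply List.in_or_app; by [left|right].
exists (subst us uC); split.
  apply/List.in_flat_map; exists uC; split => //; exact: List.in_map.
apply: eqv_trans He _.
move=> M m0 I HM; rewrite !sem_subst (es M m0 I HM).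
exact: (eC M m0 _ HM).
Qed.

Lemma sig_to_pi V P n : fqL P (fun t : term V => Sigma n t /\ vo t <= 1) ->
  fqL P (fun t : term V => Pi n t /\ vo t <= 1).
Proof.
case=> l H; exists (List.map (@tcomp V) l) => t [Ht Hv].
have Hd := (proj2 (dual_SP V)) _ _ Ht.
case: (H (dual t)); first by rewrite dual_vo.
move=> u [iu eu]; exists (tcomp u); split; first exact: List.in_map.
move=> M m0 I HM; apply: relext => x y /=.
rewrite -(eu M m0 I HM) dual_sem; split; [move=> h hh; exact: hh h | exact: NNPP].
Qed.

Fixpoint fl (A : Type) (f : nat -> A) (k : nat) : list A :=
  match k with 0 => nil | k'.+1 => f k' :: fl f k' end.

Lemma fl_in A (f : nat -> A) k i : i < k -> List.In (f i) (fl f k).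
Proof.
elim: k => // k IH; rewrite ltnS leq_eqVlt => /orP[/eqP ->|h]; [by left | right; exact: IH].
Qed.

Lemma pick_list V (A : Type) (R : A -> term V -> Prop) (L : list A) :
  exists l : list (term V), forall a, List.In a L -> (exists t, R a t) -> exists t, List.In t l /\ R a t.
Proof.
elim: L => [|a L [l IH]]; first by exists nil.
case: (classic (exists t, R a t)) => [[t ht]|hn].
- exists (t :: l) => b [<-|hb] hex; first by exists t; split => //; left.
  case: (IH b hb hex) => t' [h1 h2]; exists t'; split => //; by right.
- exists l => b [<-|hb] hex; first by case: (hn hex).
  exact: IH.
Qed.

Lemma In_nth V (l : list (term V)) t : List.In t l -> exists i, i < size l /\ nth tbot l i = t.
Proof.
elim: l => // x l IH [->|h]; first by exists 0.
case: (IH h) => i [h1 h2]; by exists i.+1.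
Qed.

Lemma combine V (S : term V -> Prop) : fqL P1 S -> fqL P2 S -> fqL P3 S -> finite_quotient S.
Proof.
case=> l1 H1 [l2 H2] [l3 H3].
pose L := List.flat_map (fun u1 => List.flat_map (fun u2 => List.map (fun u3 => (u1, u2, u3)) l3) l2) l1.
pose R := fun (a : term V * term V * term V) t => S t /\ eqv P1 t a.1.1 /\ eqv P2 t a.1.2 /\ eqv P3 t a.2.
case: (pick_list R L) => l Hl.
exists (size l), (fun i => nth tbot l i) => t St.
case: (H1 t St) => u1 [i1 e1]; case: (H2 t St) => u2 [i2 e2]; case: (H3 t St) => u3 [i3 e3].
have iL : List.In (u1, u2, u3) L.
  apply/List.in_flat_map; exists u1; split => //.
  apply/List.in_flat_map; exists u2; split => //.
  exact: (List.in_map (fun u3 => (u1, u2, u3))).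
case: (Hl _ iL); first by exists t.
move=> t' [it' [_ [f1 [f2 f3]]]] /=.
case: (In_nth it') => i [hi hn]; exists i; split => //; rewrite hn.
move=> M m0 I x y.
suff -> : sem I t = sem I t' by [].
case: (classify m0) => [h|[h|h]].
- by rewrite (e1 M m0 I h) (f1 M m0 I h).
- by rewrite (e2 M m0 I h) (f2 M m0 I h).
- by rewrite (e3 M m0 I h) (f3 M m0 I h).
Qed.

Lemma main_P V P B2 B3 (HP : sizeok P B2 B3) (a : V) (lH : list (term V))
  (HH : forall t, Sigma 1 t /\ vo t <= 1 -> exists u, List.In u lH /\ eqv P t u) n :
  fqL P (fun t : term V => Sigma n t /\ vo t <= 1) /\ fqL P (fun t : term V => Pi n t /\ vo t <= 1).
Proof.
have base : fqL P (fun t : term V => Sigma 0 t /\ vo t <= 1).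
  exists lH => t [Ht Hv]; apply: HH; split => //; exact: SigS_Sig.
elim: n => [|n [IH1 IH2]].
  split => //; exact: sig_to_pi.
have h := step HP a HH IH1 IH2.
split => //; exact: sig_to_pi.
Qed.

Theorem lemma4p8 (V : finType) (HV : 0 < #|V|) (n : nat) :
  finite_quotient (fun t : term V => Sigma 1 t /\ vo t <= 1) ->
  finite_quotient (fun t : term V => Sigma n t /\ vo t <= 1).
Proof.
move=> [k [f Hf]].
have [a _] : exists a : V, a \in V by apply/card_gt0P.
have HH : forall P, forall t, Sigma 1 t /\ vo t <= 1 -> exists u, List.In u (fl f k) /\ eqv P t u.
  move=> P t /Hf [i [hi he]]; exists (f i); split; first exact: fl_in.
  move=> M m0 I _; apply: relext => x y; exact: he.
apply: combine.
- exact: (proj1 (main_P sizeok1 a (HH P1) n)).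
- exact: (proj1 (main_P sizeok2 a (HH P2) n)).
- exact: (proj1 (main_P sizeok3 a (HH P3) n)).
Qed.
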